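(* Let $p$ be a prime, $\varepsilon>0$, $0<\alpha\le1$, and let $N=p^{1/12-\varepsilon}$ (a positive integer). If $S$ is chosen from $\mathcal{S}(N,12)$, then with probability at least $1-6p^{-12\varepsilon}$, $$\mathcal{C}_\alpha(S)>\left(\alpha|S|/\sqrt[3]{4}\right)^{3/5}.$$
   Context: $\mathcal{S}(N,k)$ denotes the random subset $S=\{x_1,\dots,x_N\}\subseteq\mathbb{Z}_p$, where $x_1,\dots,x_N$ are $k$-wise independent random variables each uniformly distributed on $\mathbb{Z}_p$. For $L\subseteq\mathbb{Z}_p^2$, $I(L)=\{x\in\mathbb{Z}_p\mid \exists (a,b),(a',b')\in L,\ (a,b)\neq(a',b'),\ ax+b=a'x+b'\}$. For $S\subseteq\mathbb{Z}_p$ and $0<\alpha\leq1$, the generic $\alpha$-complexity $\mathcal{C}_\alpha(S)$ is the smallest cardinality of a set $L\subseteq\mathbb{Z}_p^2$ with $|S\cap I(L)|\geq\alpha|S|$. *)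

(* Defs.v *)
From HB Require Import structures.
From mathcomp Require Import all_boot all_order all_algebra.
From mathcomp Require Import reals exp.
Set Implicit Arguments. Unset Strict Implicit. Unset Printing Implicit Defensive.
Import Order.TTheory GRing.Theory Num.Theory.
Local Open Scope ring_scope.

(* Lines y = a x + b in Z_p^2 are represented by pairs (a,b). *)
Definition Ipts (p : nat) (L : {set 'F_p * 'F_p}) : {set 'F_p} :=
  [set x : 'F_p | [exists l1 in L, exists l2 in L,
     (l1 != l2) && (l1.1 * x + l1.2 == l2.1 * x + l2.2)]].

Definition alpha_good (R : realType) (p : nat) (alpha : R) (S : {set 'F_p})
  (L : {set 'F_p * 'F_p}) : bool :=
  alpha * (#|S|%:R) <= (#|S :&: Ipts L|%:R : R).

(* Generic alpha-complexity: the minimum of #|L| over good L.  The default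
   value #|Z_p^2| is itself attained (the full set of lines is good when
   alpha <= 1), so this is the true minimum. *)
Definition Calpha (R : realType) (p : nat) (alpha : R) (S : {set 'F_p}) : nat :=
  \big[minn/#|[set: 'F_p * 'F_p]|]_(L : {set 'F_p * 'F_p} | alpha_good alpha S L) #|L|.

Definition is_distribution (R : realType) (p N : nat)
  (mu : {ffun 'I_N -> 'F_p} -> R) : Prop :=
  (forall w, 0 <= mu w) /\ \sum_(w : {ffun 'I_N -> 'F_p}) mu w = 1.

Definition kwise_uniform (R : realType) (p N k : nat)
  (mu : {ffun 'I_N -> 'F_p} -> R) : Prop :=
  forall (I : {set 'I_N}) (a : {ffun 'I_N -> 'F_p}), (#|I| <= k)%N ->
    \sum_(w : {ffun 'I_N -> 'F_p} | [forall i in I, w i == a i]) mu w = ((p%:R : R) ^+ #|I|)^-1.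

Definition setS (p N : nat) (w : {ffun 'I_N -> 'F_p}) : {set 'F_p} :=
  [set w i | i : 'I_N].

(* Main.v *)
Require Import Defs.
From HB Require Import structures.
From mathcomp Require Import all_boot all_order all_algebra.
From mathcomp Require Import reals exp.
From mathcomp Require Import ring lra zify.
Import Order.TTheory GRing.Theory Num.Theory.
Local Open Scope ring_scope.
Set Implicit Arguments. Unset Strict Implicit. Unset Printing Implicit Defensive.
Section Alg.
Variable F : fieldType.

Definition det3 (a b c d e f g h i : F) :=
  a*(e*i - f*h) - b*(d*i - f*g) + c*(d*h - e*g).
Definition det4 (a1 a2 a3 a4 b1 b2 b3 b4 c1 c2 c3 c4 d1 d2 d3 d4 : F) :=
  a1 * det3 b2 b3 b4 c2 c3 c4 d2 d3 d4 - a2 * det3 b1 b3 b4 c1 c3 c4 d1 d3 d4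
  + a3 * det3 b1 b2 b4 c1 c2 c4 d1 d2 d4 - a4 * det3 b1 b2 b3 c1 c2 c3 d1 d2 d3.

Lemma det4_ker (a1 a2 a3 a4 b1 b2 b3 b4 c1 c2 c3 c4 d1 d2 d3 d4 u1 u2 u3 u4 : F) :
  a1*u1 + a2*u2 + a3*u3 + a4*u4 = 0 ->
  b1*u1 + b2*u2 + b3*u3 + b4*u4 = 0 ->
  c1*u1 + c2*u2 + c3*u3 + c4*u4 = 0 ->
  d1*u1 + d2*u2 + d3*u3 + d4*u4 = 0 ->
  det4 a1 a2 a3 a4 b1 b2 b3 b4 c1 c2 c3 c4 d1 d2 d3 d4 = 0 \/ (u1 = 0 /\ u2 = 0).
Proof.
move=> ha hb hc hd.
set D := det4 _ _ _ _ _ _ _ _ _ _ _ _ _ _ _ _.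
have e1 : D * u1 = det4 (a1*u1 + a2*u2 + a3*u3 + a4*u4) a2 a3 a4
   (b1*u1 + b2*u2 + b3*u3 + b4*u4) b2 b3 b4 (c1*u1 + c2*u2 + c3*u3 + c4*u4) c2 c3 c4
   (d1*u1 + d2*u2 + d3*u3 + d4*u4) d2 d3 d4 by rewrite /D /det4 /det3; ring.
have e2 : D * u2 = det4 a1 (a1*u1 + a2*u2 + a3*u3 + a4*u4) a3 a4
   b1 (b1*u1 + b2*u2 + b3*u3 + b4*u4) b3 b4 c1 (c1*u1 + c2*u2 + c3*u3 + c4*u4) c3 c4
   d1 (d1*u1 + d2*u2 + d3*u3 + d4*u4) d3 d4 by rewrite /D /det4 /det3; ring.
rewrite ha hb hc hd in e1 e2.
have z1 : D * u1 = 0 by rewrite e1 /det4 /det3; ring.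
have z2 : D * u2 = 0 by rewrite e2 /det4 /det3; ring.
have [->|Dn] := eqVneq D 0; first by left.
right; split; apply/eqP; [move/eqP: z1|move/eqP: z2]; rewrite mulf_eq0 (negbTE Dn) //=.
Qed.

Definition v (y : {ffun 'I_12 -> F}) (n : nat) : F := y (inord n).
Definition updf (y : {ffun 'I_12 -> F}) (k : nat) (c : F) : {ffun 'I_12 -> F} :=
  [ffun i : 'I_12 => if (i : nat) == k then c else y i].
Lemma vupd y k c n : (n < 12)%N -> v (updf y k c) n = if n == k then c else v y n.
Proof. by move=> hn; rewrite /v ffunE inordK. Qed.

Definition rowe (x1 x2 x3 : F) := ((x3-x1)*x2, x3-x1, (x1-x2)*x3, x1-x2).
Definition Dp (y : {ffun 'I_12 -> F}) : F :=
  det4 ((v y 8 - v y 0) * v y 4) (v y 8 - v y 0) ((v y 0 - v y 4) * v y 8) (v y 0 - v y 4)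
       ((v y 9 - v y 1) * v y 5) (v y 9 - v y 1) ((v y 1 - v y 5) * v y 9) (v y 1 - v y 5)
       ((v y 10 - v y 2) * v y 6) (v y 10 - v y 2) ((v y 2 - v y 6) * v y 10) (v y 2 - v y 6)
       ((v y 11 - v y 3) * v y 7) (v y 11 - v y 3) ((v y 3 - v y 7) * v y 11) (v y 3 - v y 7).
Definition Q1 (y : {ffun 'I_12 -> F}) : F :=
  - v y 5 * v y 7 * v y 8 * v y 10 * v y 11 + v y 5 * v y 7 * v y 8 * v y 9 * v y 10 + v y 5 * v y 6 * v y 7 * v y 8 * v y 11 - v y 5 * v y 6 * v y 7 * v y 8 * v y 9 + v y 4 * v y 7 * v y 9 * v y 10 * v y 11 - v y 4 * v y 7 * v y 8 * v y 9 * v y 10 - v y 4 * v y 6 * v y 7 * v y 9 * v y 11 + v y 4 * v y 6 * v y 7 * v y 8 * v y 9 - v y 4 * v y 5 * v y 9 * v y 10 * v y 11 + v y 4 * v y 5 * v y 8 * v y 10 * v y 11 + v y 4 * v y 5 * v y 6 * v y 9 * v y 11 - v y 4 * v y 5 * v y 6 * v y 8 * v y 11 + v y 3 * v y 5 * v y 8 * v y 9 * v y 11 - v y 3 * v y 5 * v y 8 * v y 9 * v y 10 + v y 3 * v y 5 * v y 7 * v y 8 * v y 10 - v y 3 * v y 5 * v y 7 * v y 8 * v y 9 - v y 3 * v y 5 * v y 6 * v y 8 * v y 11 + v y 3 * v y 5 * v y 6 * v y 8 * v y 9 - v y 3 * v y 4 * v y 8 * v y 9 * v y 11 + v y 3 *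 v y 4 * v y 8 * v y 9 * v y 10 - v y 3 * v y 4 * v y 7 * v y 9 * v y 10 + v y 3 * v y 4 * v y 7 * v y 8 * v y 9 + v y 3 * v y 4 * v y 6 * v y 9 * v y 11 - v y 3 * v y 4 * v y 6 * v y 8 * v y 9 - v y 3 * v y 4 * v y 5 * v y 9 * v y 11 + v y 3 * v y 4 * v y 5 * v y 9 * v y 10 + v y 3 * v y 4 * v y 5 * v y 8 * v y 11 - v y 3 * v y 4 * v y 5 * v y 8 * v y 10 + v y 3 * v y 4 * v y 5 * v y 7 * v y 9 - v y 3 * v y 4 * v y 5 * v y 7 * v y 8 - v y 3 * v y 4 * v y 5 * v y 6 * v y 9 + v y 3 * v y 4 * v y 5 * v y 6 * v y 8 + v y 1 * v y 7 * v y 8 * v y 10 * v y 11 - v y 1 * v y 7 * v y 8 * v y 9 * v y 11 - v y 1 * v y 6 * v y 7 * v y 8 * v y 11 + v y 1 * v y 6 * v y 7 * v y 8 * v y 9 + v y 1 * v y 5 * v y 7 * v y 8 * v y 11 - v y 1 * v y 5 * v y 7 * v y 8 * v y 10 - v y 1 * v y 4 * v y 8 * v y 10 * v y 11 + v y 1 * v y 4 * v y 8 * v y 9 * v y 11 - v y 1 * v y 4 * v y 7 * v y 10 * v y 11 + v y 1 * v y 4 * v y 7 * v y 9 * v y 11 + v y 1 * v y 4 * v y 7 * v y 8 * v y 10 - v y 1 * v y 4 * v y 7 * v y 8 * v y 9 - v y 1 * v y 4 * v y 6 * v y 9 * v y 11 + v y 1 * v y 4 * v y 6 * v y 8 * v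 y 11 + v y 1 * v y 4 * v y 6 * v y 7 * v y 11 - v y 1 * v y 4 * v y 6 * v y 7 * v y 8 + v y 1 * v y 4 * v y 5 * v y 10 * v y 11 - v y 1 * v y 4 * v y 5 * v y 8 * v y 11 - v y 1 * v y 4 * v y 5 * v y 7 * v y 11 + v y 1 * v y 4 * v y 5 * v y 7 * v y 8 - v y 1 * v y 3 * v y 7 * v y 8 * v y 10 + v y 1 * v y 3 * v y 7 * v y 8 * v y 9 + v y 1 * v y 3 * v y 6 * v y 8 * v y 11 - v y 1 * v y 3 * v y 6 * v y 8 * v y 9 - v y 1 * v y 3 * v y 5 * v y 8 * v y 11 + v y 1 * v y 3 * v y 5 * v y 8 * v y 10 + v y 1 * v y 3 * v y 4 * v y 7 * v y 10 - v y 1 * v y 3 * v y 4 * v y 7 * v y 9 - v y 1 * v y 3 * v y 4 * v y 6 * v y 11 + v y 1 * v y 3 * v y 4 * v y 6 * v y 9 + v y 1 * v y 3 * v y 4 * v y 5 * v y 11 - v y 1 * v y 3 * v y 4 * v y 5 * v y 10 - v y 0 * v y 7 * v y 9 * v y 10 * v y 11 + v y 0 * v y 7 * v y 8 * v y 9 * v y 11 + v y 0 * v y 6 * v y 7 * v y 9 * v y 11 - v y 0 * v y 6 * v y 7 * v y 8 * v y 9 + v y 0 * v y 5 * v y 9 * v y 10 * v y 11 - v y 0 * v y 5 * v y 8 * v y 9 * v y 11 + v y 0 * v y 5 * v y 7 * v y 10 * v y 11 - v y 0 * v y 5 * v y 7 * v y 9 * v y 10 - v y 0 * v y 5 * v y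 7 * v y 8 * v y 11 + v y 0 * v y 5 * v y 7 * v y 8 * v y 9 - v y 0 * v y 5 * v y 6 * v y 9 * v y 11 + v y 0 * v y 5 * v y 6 * v y 8 * v y 11 - v y 0 * v y 5 * v y 6 * v y 7 * v y 11 + v y 0 * v y 5 * v y 6 * v y 7 * v y 9 - v y 0 * v y 4 * v y 7 * v y 9 * v y 11 + v y 0 * v y 4 * v y 7 * v y 9 * v y 10 - v y 0 * v y 4 * v y 5 * v y 10 * v y 11 + v y 0 * v y 4 * v y 5 * v y 9 * v y 11 + v y 0 * v y 4 * v y 5 * v y 7 * v y 11 - v y 0 * v y 4 * v y 5 * v y 7 * v y 9 + v y 0 * v y 3 * v y 7 * v y 9 * v y 10 - v y 0 * v y 3 * v y 7 * v y 8 * v y 9 - v y 0 * v y 3 * v y 6 * v y 9 * v y 11 + v y 0 * v y 3 * v y 6 * v y 8 * v y 9 - v y 0 * v y 3 * v y 5 * v y 7 * v y 10 + v y 0 * v y 3 * v y 5 * v y 7 * v y 8 + v y 0 * v y 3 * v y 5 * v y 6 * v y 11 - v y 0 * v y 3 * v y 5 * v y 6 * v y 8 + v y 0 * v y 3 * v y 4 * v y 9 * v y 11 - v y 0 * v y 3 * v y 4 * v y 9 * v y 10 - v y 0 * v y 3 * v y 4 * v y 5 * v y 11 + v y 0 * v y 3 * v y 4 * v y 5 * v y 10 + v y 0 * v y 1 * v y 6 * v y 9 * v y 11 - v y 0 * v y 1 * v y 6 * v y 8 * v y 11 - v y 0 * v y 1 * v y 6 * v y 7 * v y 9 + v y 0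 * v y 1 * v y 6 * v y 7 * v y 8 - v y 0 * v y 1 * v y 5 * v y 10 * v y 11 + v y 0 * v y 1 * v y 5 * v y 8 * v y 11 + v y 0 * v y 1 * v y 5 * v y 7 * v y 10 - v y 0 * v y 1 * v y 5 * v y 7 * v y 8 + v y 0 * v y 1 * v y 4 * v y 10 * v y 11 - v y 0 * v y 1 * v y 4 * v y 9 * v y 11 - v y 0 * v y 1 * v y 4 * v y 7 * v y 10 + v y 0 * v y 1 * v y 4 * v y 7 * v y 9.

Definition Q2 (y : {ffun 'I_12 -> F}) : F :=
  - v y 5 * v y 7 * v y 8 * v y 11 + v y 5 * v y 7 * v y 8 * v y 9 + v y 4 * v y 7 * v y 9 * v y 11 - v y 4 * v y 7 * v y 8 * v y 9 - v y 4 * v y 5 * v y 9 * v y 11 + v y 4 * v y 5 * v y 8 * v y 11 - v y 3 * v y 5 * v y 8 * v y 9 + v y 3 * v y 5 * v y 7 * v y 8 + v y 3 * v y 4 * v y 8 * v y 9 - v y 3 * v y 4 * v y 7 * v y 9 + v y 3 * v y 4 * v y 5 * v y 9 - v y 3 * v y 4 * v y 5 * v y 8 + v y 1 * v y 7 * v y 8 * v y 11 - v y 1 * v y 5 * v y 7 * v y 8 - v y 1 * v y 4 * v y 8 * v y 11 - v y 1 * v y 4 * v y 7 * v y 11 + v y 1 * v y 4 * v y 7 * v y 8 + v y 1 * v y 4 * v y 5 * v y 11 - v y 1 * v y 3 * v y 7 * v y 8 + v y 1 * v y 3 * v y 5 * v y 8 + v y 1 * v y 3 * v y 4 * v y 7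 - v y 1 * v y 3 * v y 4 * v y 5 - v y 0 * v y 7 * v y 9 * v y 11 + v y 0 * v y 5 * v y 9 * v y 11 + v y 0 * v y 5 * v y 7 * v y 11 - v y 0 * v y 5 * v y 7 * v y 9 + v y 0 * v y 4 * v y 7 * v y 9 - v y 0 * v y 4 * v y 5 * v y 11 + v y 0 * v y 3 * v y 7 * v y 9 - v y 0 * v y 3 * v y 5 * v y 7 - v y 0 * v y 3 * v y 4 * v y 9 + v y 0 * v y 3 * v y 4 * v y 5 - v y 0 * v y 1 * v y 5 * v y 11 + v y 0 * v y 1 * v y 5 * v y 7 + v y 0 * v y 1 * v y 4 * v y 11 - v y 0 * v y 1 * v y 4 * v y 7.

Definition Q3 (y : {ffun 'I_12 -> F}) : F :=
  - v y 5 * v y 7 * v y 11 + v y 5 * v y 7 * v y 9 - v y 4 * v y 7 * v y 9 + v y 4 * v y 5 * v y 11 - v y 3 * v y 5 * v y 9 + v y 3 * v y 5 * v y 7 + v y 3 * v y 4 * v y 9 - v y 3 * v y 4 * v y 5 + v y 1 * v y 7 * v y 11 - v y 1 * v y 5 * v y 7 - v y 1 * v y 4 * v y 11 + v y 1 * v y 4 * v y 7 - v y 1 * v y 3 * v y 7 + v y 1 * v y 3 * v y 5.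

Definition Q4 (y : {ffun 'I_12 -> F}) : F :=
  v y 5 * v y 7 - v y 4 * v y 7 - v y 3 * v y 5 + v y 3 * v y 4.

Definition Q5 (y : {ffun 'I_12 -> F}) : F :=
  - v y 5 + v y 4.

Definition Q6 (y : {ffun 'I_12 -> F}) : F :=
  1.

Ltac chainid := rewrite /Dp /Q1 /Q2 /Q3 /Q4 /Q5 /Q6 /det4 /det3 !vupd //=; ring.
Lemma c1 y : Dp y = v y 2 * Q1 y + Dp (updf y 2 0). Proof. chainid. Qed.
Lemma c2 y : Q1 y = v y 10 * Q2 y + Q1 (updf y 10 0). Proof. chainid. Qed.
Lemma c3 y : Q2 y = v y 8 * Q3 y + Q2 (updf y 8 0). Proof. chainid. Qed.
Lemma c4 y : Q3 y = v y 9 * Q4 y + Q3 (updf y 9 0). Proof. chainid. Qed.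
Lemma c5 y : Q4 y = v y 3 * Q5 y + Q4 (updf y 3 0). Proof. chainid. Qed.
Lemma c6 y : Q5 y = v y 4 * Q6 y + Q5 (updf y 4 0). Proof. chainid. Qed.
End Alg.


Section Count.
Variable F : finFieldType.

Definition indep (Q : {ffun 'I_12 -> F} -> F) (k : nat) :=
  forall y y' : {ffun 'I_12 -> F}, (forall i : 'I_12, (i:nat) != k -> y i = y' i) -> Q y = Q y'.

Lemma step (Fn Q : {ffun 'I_12 -> F} -> F) k : (k < 12)%N -> indep Q k ->
  (forall y, Fn y = v y k * Q y + Fn (updf y k 0)) ->
  (#|[set y | Fn y == 0%R]| <= #|[set y | Q y == 0%R]| + #|F|^11)%N.
Proof.
move=> hk hQ hF.
set B := [set y | (Q y != 0) && (Fn y == 0)].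
have sub : [set y | Fn y == 0] \subset [set y | Q y == 0] :|: B.
  apply/subsetP=> y; rewrite !inE => ->; rewrite andbT; by case: (Q y == 0).
apply: (leq_trans (subset_leq_card sub)); apply: (leq_trans (leq_card_setU _ _)).
rewrite leq_add2l.
pose g (y : {ffun 'I_12 -> F}) : {ffun 'I_11 -> F} := [ffun j : 'I_11 => y (lift (inord k) j)].
have ginj : {in B &, injective g}.
  move=> y y'; rewrite !inE => /andP[Qy Fy] /andP[_ Fy'] eg.
  have off : forall i : 'I_12, i != inord k -> y i = y' i.
    move=> i; rewrite eq_sym => /unlift_some[j eij _]; rewrite eij.
    move: eg => /(congr1 (fun f : {ffun 'I_11 -> F} => f j)); rewrite /g !ffunE.
    done.
  have offn : forall i : 'I_12, (i:nat) != k -> y i = y' i.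
    move=> i hi; apply: off; apply: contra hi => /eqP ->; by rewrite inordK.
  have eQ := hQ _ _ offn.
  have eU : updf y k 0 = updf y' k 0.
    apply/ffunP=> i; rewrite !ffunE; case: eqP => // /eqP; exact: offn.
  have : v y k * Q y = v y' k * Q y.
    have h1 := hF y; have h2 := hF y'.
    rewrite (eqP Fy) eU in h1; rewrite (eqP Fy') -eQ in h2.
    have : v y k * Q y + Fn (updf y' k 0) = v y' k * Q y + Fn (updf y' k 0) by rewrite -h1 -h2.
    by move/addIr.
  move/(mulIf Qy) => ek.
  apply/ffunP=> i; have [-> // |hi] := eqVneq i (inord k); exact: off.
rewrite -(card_in_imset ginj).
apply: (leq_trans (max_card _)).
by rewrite card_ffun card_ord.
Qed.
End Count.


Section Count2.
Variable F : finFieldType.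
Ltac indepT := let y := fresh in let y' := fresh in let H := fresh in
  move=> y y' H; rewrite /Q1 /Q2 /Q3 /Q4 /Q5 /Q6 /v !H; rewrite ?inordK //.
Lemma iQ1 : indep (@Q1 F) 2. Proof. indepT. Qed.
Lemma iQ2 : indep (@Q2 F) 10. Proof. indepT. Qed.
Lemma iQ3 : indep (@Q3 F) 8. Proof. indepT. Qed.
Lemma iQ4 : indep (@Q4 F) 9. Proof. indepT. Qed.
Lemma iQ5 : indep (@Q5 F) 3. Proof. indepT. Qed.
Lemma iQ6 : indep (@Q6 F) 4. Proof. by []. Qed.

Lemma hstep (a c k : nat) : (a <= k * c -> a + c <= k.+1 * c)%N.
Proof. move=> h; rewrite mulSn; nia. Qed.

Lemma Dzeros : (#|[set y | @Dp F y == 0%R]| <= 6 * #|F|^11)%N.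
Proof.
have e6 : #|[set y | @Q6 F y == 0%R]| = 0%N.
  apply/eqP; rewrite cards_eq0; apply/eqP/setP=> y; rewrite !inE /Q6 oner_eq0 //.
apply: (leq_trans (step _ iQ1 (@c1 F))) => //.
apply: hstep.
apply: (leq_trans (step _ iQ2 (@c2 F))) => //.
apply: hstep.
apply: (leq_trans (step _ iQ3 (@c3 F))) => //.
apply: hstep.
apply: (leq_trans (step _ iQ4 (@c4 F))) => //.
apply: hstep.
apply: (leq_trans (step _ iQ5 (@c5 F))) => //.
apply: hstep.
apply: (leq_trans (step _ iQ6 (@c6 F))) => //.
apply: hstep; by rewrite e6.
Qed.
End Count2.


Section Config.
Variable F : fieldType.
Lemma rowid (a0 b0 a1 b1 a2 b2 aB bB x1 x2 x3 : F) :
  (x3-x1)*x2*(a1-a0) + (x3-x1)*(b1-b0) + (x1-x2)*x3*(a2-a0) + (x1-x2)*(b2-b0) =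
  (a0*x1+b0 - (aB*x1+bB))*(x2-x3) + (a1*x2+b1 - (aB*x2+bB))*(x3-x1)
  + (a2*x3+b2 - (aB*x3+bB))*(x1-x2).
Proof. ring. Qed.

Lemma config (A B : nat -> F * F) (x : nat -> nat -> F) :
  (forall i j, (i < 3)%N -> (j < 4)%N ->
     (A i).1 * x i j + (A i).2 = (B j).1 * x i j + (B j).2) ->
  A 0%N != A 1%N -> Dp [ffun k : 'I_12 => x (k %/ 4)%N (k %% 4)%N] = 0.
Proof.
move=> hm hA.
have rz : forall j, (j < 4)%N ->
  (x 2 j - x 0 j) * x 1 j * ((A 1).1 - (A 0).1) + (x 2 j - x 0 j) * ((A 1).2 - (A 0).2)
  + (x 0 j - x 1 j) * x 2 j * ((A 2).1 - (A 0).1) + (x 0 j - x 1 j) * ((A 2).2 - (A 0).2) = 0.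
  move=> j hj; rewrite (rowid _ _ _ _ _ _ (B j).1 (B j).2) (hm 0%N j) // (hm 1%N j) // (hm 2%N j) //.
  by rewrite !subrr !mul0r !addr0.
have := @det4_ker F
  ((x 2 0 - x 0 0) * x 1 0) (x 2 0 - x 0 0) ((x 0 0 - x 1 0) * x 2 0) (x 0 0 - x 1 0)
  ((x 2 1 - x 0 1) * x 1 1) (x 2 1 - x 0 1) ((x 0 1 - x 1 1) * x 2 1) (x 0 1 - x 1 1)
  ((x 2 2 - x 0 2) * x 1 2) (x 2 2 - x 0 2) ((x 0 2 - x 1 2) * x 2 2) (x 0 2 - x 1 2)
  ((x 2 3 - x 0 3) * x 1 3) (x 2 3 - x 0 3) ((x 0 3 - x 1 3) * x 2 3) (x 0 3 - x 1 3)
  ((A 1).1 - (A 0).1) ((A 1).2 - (A 0).2) ((A 2).1 - (A 0).1) ((A 2).2 - (A 0).2)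
  (rz 0%N isT) (rz 1%N isT) (rz 2%N isT) (rz 3%N isT).
case=> [h|[/eqP h1 /eqP h2]].
  by rewrite /Dp /v !ffunE !inordK.
case/eqP: hA; move: h1 h2; rewrite !subr_eq0 => /eqP h1 /eqP h2.
by case: (A 0) (A 1) h1 h2 => [? ?] [? ?] /= -> ->.
Qed.
End Config.


Section Comb.
Variable p : nat.
Local Notation F := ('F_p : finFieldType).
Implicit Types (L : {set F * F}) (X : {set F}).

Definition meetb (l1 l2 : F * F) (x : F) := l1.1 * x + l1.2 == l2.1 * x + l2.2.

Definition phi L (x : F) : (F * F) * (F * F) :=
  odflt ((0, 0), (0, 0))
   [pick e : (F * F) * (F * F) | (e.1 \in L) && (e.2 \in L) && (e.1 != e.2) && meetb e.1 e.2 x].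

Lemma phiP L x : x \in Ipts L ->
  [/\ (phi L x).1 \in L, (phi L x).2 \in L, (phi L x).1 != (phi L x).2 & meetb (phi L x).1 (phi L x).2 x].
Proof.
rewrite inE => /exists_inP[l1 l1L /exists_inP[l2 l2L /andP[ne m]]].
rewrite /phi; case: pickP => [e /andP[/andP[/andP[-> ->] ->] ->] //|/(_ (l1, l2))].
by rewrite /= l1L l2L ne /meetb m.
Qed.

Lemma meet_sym l1 l2 x : meetb l1 l2 x = meetb l2 l1 x.
Proof. by rewrite /meetb eq_sym. Qed.

Lemma meet_uniq l1 l2 x x' : l1 != l2 -> meetb l1 l2 x -> meetb l1 l2 x' -> x = x'.
Proof.
case: l1 l2 => [a1 b1] [a2 b2] /= hne /eqP h /eqP h'.
have [ea|na] := eqVneq a1 a2.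
  case/eqP: hne; rewrite ea in h *; congr (_, _).
  by move/addrI: h.
have : (a1 - a2) * (x - x') = 0.
  have e1 : (a1 - a2) * x = b2 - b1.
    have -> : (a1 - a2) * x = (a1*x + b1) - (a2*x + b2) + (b2 - b1) by ring.
    by rewrite h subrr add0r.
  have e2 : (a1 - a2) * x' = b2 - b1.
    have -> : (a1 - a2) * x' = (a1*x' + b1) - (a2*x' + b2) + (b2 - b1) by ring.
    by rewrite h' subrr add0r.
  by rewrite mulrBr e1 e2 subrr.
move/eqP; rewrite mulf_eq0 subr_eq0 (negbTE na) /= subr_eq0 => /eqP //.
Qed.

Definition Nb L X l := [set x in X | ((phi L x).1 == l) || ((phi L x).2 == l)].
Definition oth L l x := if (phi L x).1 == l then (phi L x).2 else (phi L x).1.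
Definition adjb L X l u := [exists x in Nb L X l, oth L l x == u].
Definition CN L X (U : {set F * F}) := [set l in L | [forall u in U, adjb L X l u]].

Lemma NbP L X l x : X \subset Ipts L -> x \in Nb L X l ->
  [/\ x \in X, l \in L, oth L l x \in L, oth L l x != l & meetb l (oth L l x) x].
Proof.
move=> XI; rewrite inE => /andP[xX h].
have [h1 h2 h12 hm] := phiP (subsetP XI x xX).
rewrite /oth; case: eqP h => [<- _|ne /= /eqP <-]; split => //.
- by rewrite eq_sym.
- by rewrite meet_sym.
Qed.

Lemma oth_inj L X l : X \subset Ipts L -> {in Nb L X l &, injective (oth L l)}.
Proof.
move=> XI x x' hx hx' e.
have [_ _ _ ne m1] := NbP XI hx.
have [_ _ _ _ m2] := NbP XI hx'.
rewrite -e in m2.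
by apply: (meet_uniq _ m1 m2); rewrite eq_sym.
Qed.

Lemma ends L X l l' x : x \in Nb L X l -> x \in Nb L X l' -> l' = l \/ l' = oth L l x.
Proof.
rewrite !inE /oth => /andP[_ h] /andP[_ h'].
case: eqP h => [e1 _|ne /= /eqP e2]; case/orP: h' => /eqP e3.
- by left; rewrite -e3 e1.
- by right.
- by right.
- by left; rewrite -e2 e3.
Qed.

End Comb.


Section Comb2.
Variable p : nat.
Local Notation F := ('F_p : finFieldType).
Implicit Types (L : {set F * F}) (X : {set F}).

Lemma sum_ind (T : finType) (A : {set T}) (P : pred T) :
  (\sum_(x in A) (P x : nat) = #|[set x in A | P x]|)%N.
Proof.
rewrite -sum1_card big_mkcond [RHS]big_mkcond /=; apply: eq_bigr => x _; rewrite inE.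
by case: (x \in A); case: (P x).
Qed.

Lemma sum_ind' (T : finType) (A : {set T}) : #|A| = (\sum_x (x \in A : nat))%N.
Proof. by rewrite -sum1_card big_mkcond; apply: eq_bigr => x _; case: (x \in A). Qed.

Lemma sum_deg L X : X \subset Ipts L -> (\sum_(l in L) #|Nb L X l| = 2 * #|X|)%N.
Proof.
move=> XI.
have e : forall l, #|Nb L X l| =
   (\sum_(x in X) (((phi L x).1 == l) || ((phi L x).2 == l)) : nat)%N.
  by move=> l; rewrite sum_ind.
rewrite (eq_bigr _ (fun l _ => e l)) exchange_big /=.
rewrite mulnC -sum_nat_const; apply: eq_bigr => x xX.
have [h1 h2 h12 _] := phiP (subsetP XI x xX).
rewrite (bigD1 (phi L x).1) //= eqxx /= (bigD1 (phi L x).2) /=; last by rewrite h2 eq_sym h12.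
rewrite eqxx orbT big1 // => l /andP[/andP[_ n1] n2].
by rewrite eq_sym (negbTE n1) eq_sym (negbTE n2).
Qed.

Lemma card_X_le L X : X \subset Ipts L -> (#|X| <= #|L| ^ 2)%N.
Proof.
move=> XI.
have inj : {in X &, injective (phi L)}.
  move=> x x' hx hx' e.
  have [_ _ h12 m] := phiP (subsetP XI x hx).
  have [_ _ _ m'] := phiP (subsetP XI x' hx').
  rewrite -e in m'; exact: meet_uniq h12 m m'.
rewrite -(card_in_imset inj) expnS expn1 -cardsX; apply: subset_leq_card.
apply/subsetP => _ /imsetP[x xX ->].
have [h1 h2 _ _] := phiP (subsetP XI x xX).
by move: h1 h2; case: (phi L x) => a b /= ha hb; rewrite in_setX ha hb.
Qed.

Lemma tri_count L X : X \subset Ipts L ->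
  (forall U : {set F * F}, U \subset L -> #|U| = 3%N -> (#|CN L X U| <= 3)%N) ->
  (\sum_(l in L) 'C(#|Nb L X l|, 3) <= 3 * 'C(#|L|, 3))%N.
Proof.
move=> XI hU.
pose W (l : F * F) := [set U : {set F * F} | (U \subset L) && (#|U| == 3%N) && [forall u in U, adjb L X l u]].
have step1 : forall l : F * F, l \in L -> ('C(#|Nb L X l|, 3) <= #|W l|)%N.
  move=> l lL; rewrite -cards_draws.
  set T3 := [set A : {set F} | A \subset Nb L X l & #|A| == 3%N].
  pose g (T : {set F}) := oth L l @: T.
  have ginj : {in T3 &, injective g}.
    move=> T T'; rewrite !inE => /andP[sT _] /andP[sT' _] e.
    apply/setP => z; apply/idP/idP => hz.
      have : oth L l z \in g T' by rewrite -e; apply: imset_f.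
      case/imsetP => z' hz' ez.
      by rewrite (oth_inj XI (subsetP sT z hz) (subsetP sT' z' hz') ez).
    have : oth L l z \in g T by rewrite e; apply: imset_f.
    case/imsetP => z' hz' ez.
    by rewrite (oth_inj XI (subsetP sT' z hz) (subsetP sT z' hz') ez).
  rewrite -(card_in_imset ginj); apply: subset_leq_card.
  apply/subsetP => _ /imsetP[T hT ->].
  move: hT; rewrite !inE => /andP[sT cT].
  rewrite /g card_in_imset; last by move=> a b ha hb; apply: (oth_inj XI); apply: (subsetP sT).
  rewrite cT andbT; apply/andP; split.
    apply/subsetP => _ /imsetP[z hz ->]; by have [] := NbP XI (subsetP sT z hz).
  apply/forall_inP => _ /imsetP[z hz ->]; apply/exists_inP; exists z => //.
  exact: subsetP sT z hz.
apply: (@leq_trans (\sum_(l in L) #|W l|)); first by apply: leq_sum.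
rewrite -cards_draws.
set Tri := [set A : {set F * F} | A \subset L & #|A| == 3%N].
have e2 : (\sum_(l in L) #|W l| = \sum_(l in L) \sum_(U : {set F * F}) (U \in W l : nat))%N.
  by apply: eq_bigr => l _; rewrite sum_ind'.
rewrite e2 exchange_big /= (sum_ind' Tri) big_distrr /=; apply: leq_sum => U _.
case: (boolP (U \in Tri)) => hT.
  rewrite muln1.
  have -> : (\sum_(l in L) (U \in W l : nat) = #|CN L X U|)%N.
    rewrite /CN -sum_ind; apply: eq_bigr => l _.
    by move: hT; rewrite !inE => ->.
  by move: hT; rewrite inE => /andP[s /eqP c]; apply: hU.
rewrite muln0 big1 // => l _; rewrite inE.
by move: hT; rewrite inE => /negbTE ->.
Qed.
End Comb2.


Lemma binup k n : ('C(k,3) + n * 'C(k,2) <= 'C(k + n,3))%N.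
Proof.
elim: n => [|n IH]; first by rewrite addn0 mul0n addn0.
rewrite addnS binS mulSn.
have h : ('C(k, 2) <= 'C(k + n, 2))%N by apply: leq_bin2l; rewrite leq_addr.
lia.
Qed.

Lemma bindown d n : ('C(d + n,3) <= 'C(d,3) + n * 'C(d + n,2))%N.
Proof.
elim: n => [|n IH]; first by rewrite addn0 mul0n addn0.
rewrite addnS binS mulSn.
have h : ('C(d + n, 2) <= 'C((d + n).+1, 2))%N by apply: leq_bin2l.
have h2 : (n * 'C(d + n, 2) <= n * 'C((d + n).+1, 2))%N by apply: leq_mul.
lia.
Qed.

Lemma secant d k : ('C(k,3) + 'C(k,2) * d <= 'C(d,3) + 'C(k,2) * k)%N.
Proof.
case: (leqP k d) => h.
  rewrite -(subnKC h); set n := (d - k)%N.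
  have := binup k n; nia.
rewrite -(subnKC (ltnW h)); set n := (k - d)%N.
have := bindown d n; nia.
Qed.

Lemma bin3E n : ('C(n.+2, 3) * 6 = n.+2 * n.+1 * n)%N.
Proof. by rewrite bin_ffact !ffactnS ffactn0 /=; ring. Qed.

Lemma arith (I : finType) (A : {set I}) (d : I -> nat) (E : nat) :
  (\sum_(l in A) d l = 2 * E)%N -> (0 < E)%N -> (E <= #|A|^2)%N ->
  (4 * #|A|^5 <= E^3)%N -> (3 * 'C(#|A|,3) < \sum_(l in A) 'C(d l, 3))%N.
Proof.
move=> hs hE hEm h4.
set m := #|A| in hEm h4 *.
have m0 : (0 < m)%N by case: m hEm h4 => //; rewrite exp0n //; lia.
have m6 : (E ^ 3 <= m ^ 6)%N.
  by rewrite (_ : 6 = 2 * 3)%N // expnM leq_exp2r.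
have m4 : (4 <= m)%N.
  have : (4 * m ^ 5 <= m * m ^ 5)%N by rewrite -expnS; apply: leq_trans m6.
  by rewrite leq_pmul2r // expn_gt0 m0.
set k := ((2 * E) %/ m)%N.
have hk : (2 * E < k.+1 * m)%N by apply: ltn_ceil.
have hkm : (k * m <= 2 * E)%N by apply: leq_trunc_div.
have hsum : (m * 'C(k,3) <= \sum_(l in A) 'C(d l, 3))%N.
  have h : (\sum_(l in A) ('C(k,3) + 'C(k,2) * d l) <=
            \sum_(l in A) ('C(d l,3) + 'C(k,2) * k))%N.
    by apply: leq_sum => l _; exact: secant.
  rewrite !big_split /= -!big_distrr /= hs !sum_nat_const -/m in h.
  have := leq_mul (leqnn 'C(k,2)) hkm.
  move: h; set S3 := (\sum_(l in A) _)%N; set c2 := 'C(k,2); set c3 := 'C(k,3).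
  rewrite [(m * k)%N]mulnC; lia.
apply: leq_trans hsum.
have c1 : (8 * E ^ 3 < (k.+1 * m) ^ 3)%N.
  by rewrite (_ : 8 = 2 ^ 3)%N // -expnMn ltn_exp2r.
have c2 : (32 * m ^ 2 < k.+1 ^ 3)%N.
  have : (32 * m ^ 2 * m ^ 3 < k.+1 ^ 3 * m ^ 3)%N.
    rewrite -expnMn; apply: leq_ltn_trans c1.
    rewrite -mulnA -expnD /= (_ : 32 = 8 * 4)%N // -mulnA leq_mul2l /=.
    exact: h4.
  by rewrite ltn_pmul2r // expn_gt0 m0.
have k8 : (8 < k.+1)%N.
  rewrite -(ltn_exp2r _ _ (isT : (0 < 3)%N)); apply: leq_ltn_trans c2.
  have : (16 <= m ^ 2)%N by rewrite (_ : 16 = 4 ^ 2)%N // leq_exp2r.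
  lia.
have [t kt] : exists t, k = t.+2 by exists (k.-2); lia.
have [s ms] : exists s, m = s.+2 by exists (m.-2); lia.
have c3 : (4 * m ^ 2 < t ^ 3)%N.
  have : (k.+1 ^ 3 <= (2 * t) ^ 3)%N by rewrite leq_exp2r //; lia.
  rewrite expnMn; lia.
rewrite -(ltn_pmul2r (isT : (0 < 6)%N)) -mulnA -[X in (_ < X)%N]mulnA.
rewrite ms kt !bin3E -ms.
have : (s.+1 * s <= m ^ 2)%N by rewrite ms expnS expn1; apply: leq_mul; lia.
have : (t ^ 3 <= t.+2 * t.+1 * t)%N.
  rewrite (_ : t ^ 3 = t * t * t)%N; last by rewrite !expnS expn0 muln1 mulnA.
  by apply: leq_mul => //; apply: leq_mul; lia.
move=> h1 h2; have mp : (0 < m ^ 2)%N by rewrite expn_gt0 m0.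
rewrite -!mulnA mulnCA ltn_pmul2l // !mulnA.
lia.
Qed.


Lemma nth_set (T : finType) (A : {set T}) (x0 : T) k : (k <= #|A|)%N ->
  (forall i, (i < k)%N -> nth x0 (enum A) i \in A) /\
  (forall i j, (i < k)%N -> (j < k)%N -> nth x0 (enum A) i = nth x0 (enum A) j -> i = j).
Proof.
move=> hk; rewrite cardE in hk; split.
  by move=> i hi; rewrite -mem_enum; apply: mem_nth; apply: leq_trans hk.
move=> i j hi hj e; apply/eqP; rewrite -(nth_uniq x0 _ _ (enum_uniq (mem A))).
- by rewrite e.
- exact: leq_trans hi hk.
- exact: leq_trans hj hk.
Qed.

Section K34.
Variable p : nat.
Local Notation F := ('F_p : finFieldType).

Lemma K34 (S : {set F}) (L : {set F * F}) :
  (0 < #|S :&: Ipts L|)%N -> (4 * #|L|^5 <= #|S :&: Ipts L|^3)%N ->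
  exists (A B : nat -> F * F) (x : nat -> nat -> F),
   [/\ forall i j, (i < 3)%N -> (j < 4)%N ->
         (A i).1 * x i j + (A i).2 = (B j).1 * x i j + (B j).2,
       A 0%N != A 1%N,
       forall i j, (i < 3)%N -> (j < 4)%N -> x i j \in S
     & forall i j i' j', (i < 3)%N -> (j < 4)%N -> (i' < 3)%N -> (j' < 4)%N ->
         x i j = x i' j' -> i = i' /\ j = j'].
Proof.
set X := S :&: Ipts L => hX h4.
have XI : X \subset Ipts L by apply: subsetIr.
have /existsP[U /andP[/andP[UL /eqP U3] CN4]] :
    [exists U : {set F * F}, (U \subset L) && (#|U| == 3%N) && (3 < #|CN L X U|)%N].
  apply/existsPn => hn.
  have := tri_count XI.
  have hU : forall U : {set F * F}, U \subset L -> #|U| = 3%N -> (#|CN L X U| <= 3)%N.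
    by move=> U UL U3; move: (hn U); rewrite UL U3 eqxx /= -leqNgt.
  move/(_ hU); apply/negP; rewrite -ltnNge.
  apply: (@arith _ L (fun l => #|Nb L X l|) #|X|) => //.
  - exact: sum_deg.
  - exact: card_X_le.
have [Ain Ainj] := nth_set (0, 0) (eq_leq (esym U3)).
have [Bin Binj] := nth_set (0, 0) CN4.
set A := fun i => nth (0, 0) (enum U) i.
set B := fun j => nth (0, 0) (enum (CN L X U)) j.
pose x i j := odflt 0 [pick z in Nb L X (B j) | oth L (B j) z == A i].
have hx : forall i j, (i < 3)%N -> (j < 4)%N ->
    x i j \in Nb L X (B j) /\ oth L (B j) (x i j) = A i.
  move=> i j hi hj.
  have := Bin j hj; rewrite inE => /andP[_ /forall_inP/(_ (A i) (Ain i hi))].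
  case/exists_inP => z hz hoz.
  rewrite /x; case: pickP => [z' /andP[h1 /eqP h2] //|/(_ z)].
  by rewrite hz hoz.
have BnU : forall j, (j < 4)%N -> B j \notin U.
  move=> j hj; apply/negP => hBU.
  have := Bin j hj; rewrite inE => /andP[_ /forall_inP/(_ (B j) hBU)].
  case/exists_inP => z hz /eqP hoz.
  by have [_ _ _ /eqP] := NbP XI hz.
exists A, B, x; split.
- move=> i j hi hj; have [h1 h2] := hx i j hi hj.
  have [_ _ _ _ m] := NbP XI h1; rewrite h2 meet_sym in m.
  exact/eqP.
- by apply/negP => /eqP /(Ainj 0%N 1%N isT isT).
- move=> i j hi hj; have [h1 _] := hx i j hi hj.
  by have [] := NbP XI h1; rewrite inE => /andP[].
- move=> i j i' j' hi hj hi' hj' e.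
  have [h1 h2] := hx i j hi hj; have [h1' h2'] := hx i' j' hi' hj'.
  rewrite -e in h1' h2'.
  case: (ends h1 h1') => eB.
    have ej := Binj _ _ hj' hj eB.
    subst j'; split => //.
    have eA : A i = A i' by rewrite -h2 -h2'.
    exact: Ainj eA.
  exfalso; move: (BnU j' hj'); rewrite eB h2 => /negP; apply; exact: Ain.
Qed.
End K34.


Section Prob.
Variables (R : realType) (p N : nat) (mu : {ffun 'I_N -> 'F_p} -> R).

Definition comp (w : {ffun 'I_N -> 'F_p}) (f : {ffun 'I_12 -> 'I_N}) : {ffun 'I_12 -> 'F_p} :=
  [ffun k => w (f k)].

Definition ext (f : {ffun 'I_12 -> 'I_N}) (y : {ffun 'I_12 -> 'F_p}) : {ffun 'I_N -> 'F_p} :=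
  [ffun i => if [pick k | f k == i] is Some k then y k else 0].

Lemma kw_comp (f : {ffun 'I_12 -> 'I_N}) y : injective f -> kwise_uniform 12 mu ->
  \sum_(w | comp w f == y) mu w = ((p%:R : R) ^+ 12)^-1.
Proof.
move=> inj kw.
have := kw (f @: setT) (ext f y).
rewrite card_imset // cardsT card_ord => /(_ (leqnn _)) <-.
apply: eq_bigl => w; apply/eqP/forall_inP.
  move=> e _ /imsetP[k _ ->].
  rewrite /ext ffunE; case: pickP => [k' /eqP /inj -> |/(_ k)]; last by rewrite eqxx.
  by rewrite -e ffunE.
move=> H; apply/ffunP => k; rewrite ffunE.
have := H (f k) (imset_f _ (in_setT k)); rewrite /ext ffunE.
case: pickP => [k' /eqP /inj -> /eqP //|/(_ k)]; by rewrite eqxx.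
Qed.

Lemma prob_bound : prime p -> is_distribution mu -> kwise_uniform 12 mu ->
  \sum_(w | [exists f : {ffun 'I_12 -> 'I_N}, injectiveb f && (Dp (comp w f) == 0)]) mu w
    <= 6 * (N%:R : R) ^+ 12 / p%:R.
Proof.
move=> pp [mu0 mu1] kw.
have p0 : (0 < p)%N by apply: prime_gt0.
have pR : (0 < (p%:R : R)) by rewrite ltr0n.
set c := (#|[set y : {ffun 'I_12 -> 'F_p} | Dp y == 0]|%:R * ((p%:R : R) ^+ 12)^-1).
have st1 : \sum_(w | [exists f : {ffun 'I_12 -> 'I_N}, injectiveb f && (Dp (comp w f) == 0)]) mu w
   <= \sum_w \sum_(f : {ffun 'I_12 -> 'I_N} | injectiveb f) (if Dp (comp w f) == 0 then mu w else 0).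
  rewrite big_mkcond /=; apply: ler_sum => w _.
  case: ifP => [/existsP[f0 /andP[i0 z0]]|_]; last first.
    by apply: sumr_ge0 => f _; case: ifP.
  rewrite (bigD1 f0) //= z0 lerDl; apply: sumr_ge0 => f _; by case: ifP.
apply: (le_trans st1); rewrite exchange_big /=.
have st2 : forall f : {ffun 'I_12 -> 'I_N}, injectiveb f ->
    \sum_w (if Dp (comp w f) == 0 then mu w else 0) = c.
  move=> f /injectiveP inj.
  rewrite -big_mkcond /= (partition_big (fun w => comp w f) (fun y => Dp y == 0)) //=.
  rewrite /c mulr_natl -sumr_const; apply: eq_big => [y|y hy]; first by rewrite inE.
  rewrite -(kw_comp y inj kw); apply: eq_bigl => w.
  by case: (comp w f =P y) => [->|_]; rewrite ?hy ?eqxx ?andbF.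
rewrite (eq_bigr (fun _ => c)) //.
have c0 : 0 <= c by rewrite /c mulr_ge0 // invr_ge0 exprn_ge0 // ler0n.
apply: (le_trans (y := \sum_(f : {ffun 'I_12 -> 'I_N}) c)).
  by rewrite [X in _ <= X](bigID (fun f : {ffun 'I_12 -> 'I_N} => injectiveb f)) /= lerDl sumr_ge0.
rewrite sumr_const card_ffun !card_ord.
have hz : (#|[set y : {ffun 'I_12 -> 'F_p} | Dp y == 0%R]| <= 6 * p ^ 11)%N.
  by have := @Dzeros ('F_p : finFieldType); rewrite card_Fp.
rewrite /c -[X in X <= _]mulr_natr natrX.
have hzR : (#|[set y : {ffun 'I_12 -> 'F_p} | Dp y == 0%R]|%:R : R) <= 6 * p%:R ^+ 11.
  by rewrite -natrX -natrM ler_nat.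
apply: (le_trans (y := 6 * p%:R ^+ 11 / p%:R ^+ 12 * N%:R ^+ 12)).
  by rewrite ler_wpM2r ?exprn_ge0 ?ler0n // ler_wpM2r ?invr_ge0 ?exprn_ge0 ?ler0n.
have pn0 : (p%:R : R) != 0 by rewrite pnatr_eq0 -lt0n.
rewrite le_eqVlt; apply/orP; left; apply/eqP.
by field.
Qed.
End Prob.


Lemma Calpha_attained (R : realType) p (alpha : R) (S : {set 'F_p}) : alpha <= 1 ->
  exists L, alpha_good alpha S L /\ #|L| = Calpha alpha S.
Proof.
move=> a1.
have gT : alpha_good alpha S [set: 'F_p * 'F_p].
  rewrite /alpha_good.
  have -> : S :&: Ipts [set: 'F_p * 'F_p] = S.
    apply/setIidPl/subsetP => z _; rewrite inE.
    apply/exists_inP; exists (1, 0); first by rewrite inE.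
    apply/exists_inP; exists (0, z); first by rewrite inE.
    apply/andP; split; first by apply/eqP => [[/eqP]]; rewrite oner_eq0.
    by rewrite /= mul1r mul0r addr0 add0r.
  by rewrite -[X in _ <= X]mul1r ler_wpM2r // ler0n.
rewrite /Calpha; elim/big_rec: _ => [|L c gL [L' [gL' <-]]]; first by exists [set: 'F_p * 'F_p].
have [h|h] := leqP #|L| #|L'|.
  by exists L; split => //; apply/esym/minn_idPl.
by exists L'; split => //; apply/esym/minn_idPr; apply: ltnW.
Qed.

Lemma det_bad (R : realType) p N (alpha : R) (w : {ffun 'I_N -> 'F_p}) :
  prime p -> 0 < alpha -> alpha <= 1 -> (0 < N)%N ->
  ~~ ((Calpha alpha (setS w))%:R >
      (alpha * (#|setS w|%:R) / (4 : R) `^ (3^-1)) `^ (3 / 5)) ->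
  [exists f : {ffun 'I_12 -> 'I_N}, injectiveb f && (Dp (comp w f) == 0)].
Proof.
move=> pp a0 a1 N0 hnot.
set S := setS w in hnot *.
have [L [gL cL]] := Calpha_attained S a1.
rewrite -cL -leNgt in hnot.
set E := #|S :&: Ipts L| in gL.
set m := #|L| in hnot.
set t := alpha * #|S|%:R in gL hnot.
have S0 : (0 < #|S|)%N.
  by apply/card_gt0P; exists (w (Ordinal N0)); apply: imset_f.
have t0 : 0 < t by rewrite /t mulr_gt0 // ltr0n.
have E0 : (0 < E)%N by rewrite -(ltr0n R); apply: lt_le_trans gL.
set c := (4 : R) `^ (3^-1).
have c0 : 0 < c by apply: powR_gt0.
have cc3 : c ^+ 3 = 4.
  have n3 : (3 : R) != 0 by rewrite pnatr_eq0.
  by rewrite /c -powR_mulrn ?powR_ge0 // -powRrM mulVf // powRr1.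
have h4 : (4 * m ^ 5 <= E ^ 3)%N.
  rewrite -(ler_nat R) natrM !natrX.
  set b := t / c.
  have b0 : 0 <= b by rewrite /b divr_ge0 // ltW.
  have hm5 : (m%:R : R) ^+ 5 <= b ^+ 3.
    have := ge0_ler_powR (ler0n R 5) (ler0n R m) (powR_ge0 b (3/5)) hnot.
    rewrite powR_mulrn ?ler0n // -powRrM.
    have -> : (3 / 5 * 5%:R : R) = 3%:R by field.
    by rewrite powR_mulrn.
  have : b ^+ 3 = t ^+ 3 / 4 by rewrite /b exprMn exprVn cc3.
  move=> eb; rewrite eb in hm5.
  have tE : t ^+ 3 <= (E%:R) ^+ 3 by apply: lerXn2r => //; rewrite nnegrE ?ler0n // ltW.
  have : 4 * (m%:R : R) ^+ 5 <= t ^+ 3.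
    have n4 : (4 : R) != 0 by rewrite pnatr_eq0.
    have := ler_wpM2l (ler0n R 4) hm5.
    have -> : (4 : R) * (t ^+ 3 / 4) = t ^+ 3 by rewrite mulrC mulfVK.
    by [].
  move=> h; apply: le_trans h tE.
have [A [B [x [hm hA hS hd]]]] := K34 E0 h4.
pose i0 := Ordinal N0.
pose idx (z : 'F_p) := odflt i0 [pick i | w i == z].
have wi : forall i j, (i < 3)%N -> (j < 4)%N -> w (idx (x i j)) = x i j.
  move=> i j hi hj; have := hS i j hi hj; rewrite /S /setS => /imsetP[i1 _ e].
  rewrite /idx; case: pickP => [i2 /eqP //|/(_ i1)]; by rewrite e eqxx.
pose f := [ffun k : 'I_12 => idx (x (k %/ 4)%N (k %% 4)%N)].
have k3 : forall k : 'I_12, (k %/ 4 < 3)%N by move=> k; rewrite ltn_divLR.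
have k4 : forall k : 'I_12, (k %% 4 < 4)%N by move=> k; rewrite ltn_pmod.
have ec : comp w f = [ffun k : 'I_12 => x (k %/ 4)%N (k %% 4)%N].
  by apply/ffunP => k; rewrite !ffunE wi.
apply/existsP; exists f; apply/andP; split.
  apply/injectiveP => k k' e.
  have : x (k %/ 4)%N (k %% 4)%N = x (k' %/ 4)%N (k' %% 4)%N.
    by rewrite -wi // -[in RHS]wi // -!(ffunE (fun k : 'I_12 => idx (x (k %/ 4)%N (k %% 4)%N))) -/f e.
  case/hd => // e1 e2; apply: val_inj => /=.
  by rewrite (divn_eq k 4) (divn_eq k' 4) e1 e2.
by rewrite ec; apply/eqP; apply: config hm hA.
Qed.


Unset Implicit Arguments.

Theorem theorem9 (R : realType) (p N : nat) (eps alpha : R)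
  (mu : {ffun 'I_N -> 'F_p} -> R) :
  prime p -> 0 < eps -> 0 < alpha -> alpha <= 1 ->
  (0 < N)%N -> (N%:R : R) = (p%:R : R) `^ (12^-1 - eps) ->
  is_distribution mu -> kwise_uniform 12 mu ->
  1 - 6 * (p%:R : R) `^ (- (12 * eps)) <=
  \sum_(w : {ffun 'I_N -> 'F_p} | (Calpha alpha (setS w))%:R >
             (alpha * (#|setS w|%:R) / (4 : R) `^ (3^-1)) `^ (3 / 5)) mu w.
Proof.
move=> pp eps0 a0 a1 N0 hN dist kw.
have [mu0 mu1] := dist.
pose Pw (w : {ffun 'I_N -> 'F_p}) := (alpha * (#|setS w|%:R) / (4 : R) `^ (3^-1)) `^ (3 / 5) < (Calpha alpha (setS w))%:R.
change (1 - 6 * (p%:R : R) `^ (- (12 * eps)) <= \sum_(w | Pw w) mu w).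
have e : \sum_w mu w = \sum_(w | Pw w) mu w + \sum_(w | ~~ Pw w) mu w by apply: bigID.
have hB1 : \sum_(w | ~~ Pw w) mu w <=
    \sum_(w | [exists f : {ffun 'I_12 -> 'I_N}, injectiveb f && (Dp (comp w f) == 0)]) mu w.
  rewrite big_mkcond [X in _ <= X]big_mkcond /=; apply: ler_sum => w _.
  case: ifP => h.
    by rewrite (det_bad pp a0 a1 N0 h).
  by case: ifP.
have hB2 := prob_bound pp dist kw.
have pn0 : (p%:R : R) != 0 by rewrite pnatr_eq0 -lt0n prime_gt0.
have p0 : (0 : R) <= p%:R by rewrite ler0n.
have eN : (N%:R : R) ^+ 12 = p%:R * (p%:R : R) `^ (- (12 * eps)).
  rewrite hN -powR_mulrn ?powR_ge0 // -powRrM.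
  have -> : ((12^-1 - eps) * 12%:R : R) = 1 + (- (12 * eps)).
    have n12 : (12 : R) != 0 by rewrite pnatr_eq0.
    by field.
  by rewrite powRD ?pn0 ?implybT // powRr1.
rewrite eN in hB2.
have e6 : 6 * (p%:R * (p%:R : R) `^ (- (12 * eps))) / p%:R = 6 * (p%:R : R) `^ (- (12 * eps)).
  by field.
rewrite e6 in hB2.
move: e hB1 hB2; rewrite mu1.
set G := \sum_(w | Pw w) mu w.
set B1 := \sum_(w | ~~ Pw w) mu w.
set B2 := \sum_(w | _) mu w.
set q := (p%:R : R) `^ _.
move=> e h1 h2.
lra.
Qed.
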